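(* Let $\mathcal F=(f_t)$ be a continuous flow on a compact metric space $(X,d)$ and $\varepsilon>0$. Then $\mathrm{NE}^\times(\varepsilon)=(X\times\mathrm{NE}(\varepsilon))\cup(\mathrm{NE}(\varepsilon)\times X)$.
   Context: $\Gamma_\varepsilon(x)=\{y: d(f_tx,f_ty)<\varepsilon\ \forall t\in\mathbb{R}\}$ and $\mathrm{NE}(\varepsilon)=\{x:\Gamma_\varepsilon(x)\not\subset f_{[-s,s]}(x)\text{ for every } s>0\}$, where $f_{[-s,s]}(x)=\{f_rx:r\in[-s,s]\}$. On $X\times X$ with metric $\tilde d((x,y),(w,z))=\max\{d(x,w),d(y,z)\}$ and product flow $(f_t\times f_t)$: $\Gamma_\varepsilon(x,y)=\{(x',y'):\tilde d((f_tx,f_ty),(f_tx',f_ty'))<\varepsilon\ \forall t\in\mathbb{R}\}$ and $\mathrm{NE}^\times(\varepsilon)=\{(x,y):\Gamma_\varepsilon(x,y)\not\subset f_{[-s,s]}(x)\times f_{[-s,s]}(y)\text{ for any }s>0\}$. *)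

(* Defs.v *)
From Stdlib Require Import Reals.
Open Scope R_scope.

Definition is_metric {X : Type} (d : X -> X -> R) : Prop :=
  (forall x y, 0 <= d x y) /\
  (forall x y, d x y = 0 <-> x = y) /\
  (forall x y, d x y = d y x) /\
  (forall x y z, d x z <= d x y + d y z).

Definition compact_metric {X : Type} (d : X -> X -> R) : Prop :=
  forall u : nat -> X, exists (phi : nat -> nat) (l : X),
    (forall n, (phi n < phi (S n))%nat) /\
    (forall e, 0 < e -> exists N, forall n, (N <= n)%nat -> d (u (phi n)) l < e).

Definition continuous_flow {X : Type} (d : X -> X -> R) (f : R -> X -> X) : Prop :=
  (forall x, f 0 x = x) /\
  (forall s t x, f (s + t) x = f s (f t x)) /\
  (forall t x e, 0 < e -> exists delta, 0 < delta /\
     forall t' x', Rabs (t' - t) < delta -> d x x' < delta ->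
       d (f t x) (f t' x') < e).

Definition Gamma {X : Type} (d : X -> X -> R) (f : R -> X -> X) (eps : R) (x : X)
  : X -> Prop := fun y => forall t, d (f t x) (f t y) < eps.

Definition orbit_seg {X : Type} (f : R -> X -> X) (s : R) (x : X) : X -> Prop :=
  fun y => exists r, -s <= r <= s /\ y = f r x.

Definition NE {X : Type} (d : X -> X -> R) (f : R -> X -> X) (eps : R) (x : X) : Prop :=
  forall s, 0 < s -> ~ (forall y, Gamma d f eps x y -> orbit_seg f s x y).

Definition dprod {X : Type} (d : X -> X -> R) (p q : X * X) : R :=
  Rmax (d (fst p) (fst q)) (d (snd p) (snd q)).

Definition Gamma_prod {X : Type} (d : X -> X -> R) (f : R -> X -> X) (eps : R)
  (p : X * X) : X * X -> Prop :=
  fun q => forall t, dprod d (f t (fst p), f t (snd p)) (f t (fst q), f t (snd q)) < eps.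

Definition NE_prod {X : Type} (d : X -> X -> R) (f : R -> X -> X) (eps : R)
  (p : X * X) : Prop :=
  forall s, 0 < s -> ~ (forall q, Gamma_prod d f eps p q ->
     orbit_seg f s (fst p) (fst q) /\ orbit_seg f s (snd p) (snd q)).

(* Main.v *)
Require Import Defs.
From Stdlib Require Import Reals Lra Classical.
Open Scope R_scope.

Lemma seg_mono {X : Type} (f : R -> X -> X) s s' x y :
  s <= s' -> orbit_seg f s x y -> orbit_seg f s' x y.
Proof. intros H [r [Hr E]]. exists r. split; [lra|exact E]. Qed.

Lemma notNE {X : Type} (d : X -> X -> R) f eps x :
  ~ NE d f eps x -> exists s, 0 < s /\ forall y, Gamma d f eps x y -> orbit_seg f s x y.
Proof.
  intros H. apply NNPP. intros H2. apply H. intros s hs H3. apply H2.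
  exists s. split; assumption.
Qed.

Theorem lemma4p4 (X : Type) (d : X -> X -> R) (f : R -> X -> X) (eps : R)
  (Hd : is_metric d) (Hc : compact_metric d) (Hf : continuous_flow d f)
  (Heps : 0 < eps) :
  forall p : X * X,
    NE_prod d f eps p <-> (NE d f eps (snd p) \/ NE d f eps (fst p)).
Proof.
  destruct Hd as [Hpos [Hz [Hsym Htri]]].
  assert (Hxx : forall x, d x x = 0) by (intro x; apply Hz; reflexivity).
  intros [a b]; simpl. split.
  - intros H. apply NNPP. intros Hn.
    assert (Hb : ~ NE d f eps b) by tauto.
    assert (Ha : ~ NE d f eps a) by tauto.
    destruct (notNE d f eps b Hb) as [s1 [h1 G1]].
    destruct (notNE d f eps a Ha) as [s2 [h2 G2]].
    apply (H (Rmax s1 s2)).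
    + apply Rlt_le_trans with s1; [lra| apply Rmax_l].
    + intros [q1 q2] Hq; simpl. split.
      * apply seg_mono with s2; [apply Rmax_r|]. apply G2.
        intro t. specialize (Hq t). unfold dprod in Hq; simpl in Hq.
        eapply Rle_lt_trans; [apply Rmax_l|exact Hq].
      * apply seg_mono with s1; [apply Rmax_l|]. apply G1.
        intro t. specialize (Hq t). unfold dprod in Hq; simpl in Hq.
        eapply Rle_lt_trans; [apply Rmax_r|exact Hq].
  - intros [H|H] s hs Hall.
    + apply (H s hs). intros y Hy.
      destruct (Hall (a, y)) as [_ R2]; [|exact R2].
      intro t. unfold dprod; simpl. rewrite Hxx.
      apply Rmax_lub_lt; [exact Heps| apply Hy].
    + apply (H s hs). intros y Hy.
      destruct (Hall (y, b)) as [R1 _]; [|exact R1].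
      intro t. unfold dprod; simpl. rewrite Hxx.
      apply Rmax_lub_lt; [apply Hy|exact Heps].
Qed.
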